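(* Let $N\cong\mathbb{Z}^3$ and let $P$ be a minimal Fano polytope in $N_\mathbb{R}$ which contains two triangles $T_1,T_2$, whose vertices are vertices of $P$, lying in distinct two-dimensional linear subspaces $L_1\ne L_2$, such that $T_1$ is equivalent (under an isomorphism of lattices $\mathbb{Z}^2\to N\cap L_1$) to $\mathrm{conv}\{(1,0),(0,1),(-1,-1)\}$ and $T_2$ is equivalent (under an isomorphism $\mathbb{Z}^2\to N\cap L_2$) to $\mathrm{conv}\{(1,0),(0,1),(-2,-1)\}$. Then, up to the action of $GL(3,\mathbb{Z})$, $P$ is the convex hull of the columns of $$\begin{pmatrix}1&0&0&-2&-1\\0&1&0&-1&0\\0&0&1&0&-1\end{pmatrix}.$$
   Context: A Fano polytope is a three-dimensional convex polytope $P\subset N_\mathbb{R}$ with vertices in $N$ such that the origin is the only lattice point in the interior of $P$. It is minimal if, for every vertex $\rho$ of $P$, the polytope $\mathrm{conv}((P\cap N)\setminus\{\rho\})$ is not a Fano polytope. Polytopes are identified up to $GL(3,\mathbb{Z})$ (after choosing a basis of $N$). *)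

(* Defs.v *)
From HB Require Import structures.
From mathcomp Require Import all_boot all_order all_algebra.
From mathcomp Require Import reals.
Set Implicit Arguments. Unset Strict Implicit. Unset Printing Implicit Defensive.
Import Order.TTheory GRing.Theory Num.Theory.
Local Open Scope ring_scope.

Definition lat {R : realType} (v : 'cV[int]_3) : 'cV[R]_3 :=
  map_mx (fun z : int => z%:~R) v.

Definition vec3 (a b c : int) : 'cV[int]_3 := \col_i (nth 0 [:: a; b; c] i).

Definition conv {R : realType} (A : 'cV[R]_3 -> Prop) (x : 'cV[R]_3) : Prop :=
  exists (n : nat) (p : 'I_n -> 'cV[R]_3) (w : 'I_n -> R),
    (forall i, A (p i)) /\ (forall i, 0 <= w i) /\
    \sum_(i < n) w i = 1 /\ x = \sum_(i < n) w i *: p i.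

(* Topological interior in R^3 (sup-norm balls; same topology as Euclidean). *)
Definition interior3 {R : realType} (P : 'cV[R]_3 -> Prop) (x : 'cV[R]_3) : Prop :=
  exists e : R, 0 < e /\
    forall y : 'cV[R]_3, (forall i, `|y i 0 - x i 0| < e) -> P y.

Definition is_vertex {R : realType} (P : 'cV[R]_3 -> Prop) (x : 'cV[R]_3) : Prop :=
  P x /\ forall (y z : 'cV[R]_3) (t : R), P y -> P z -> 0 < t -> t < 1 ->
    x = t *: y + (1 - t) *: z -> y = z.

Definition lattice_polytope {R : realType} (P : 'cV[R]_3 -> Prop) : Prop :=
  exists s : seq 'cV[int]_3,
    forall x, P x <-> conv (fun y => exists2 v, v \in s & y = lat v) x.

(* Fano polytope: lattice polytope whose only interior lattice point is the
   origin (which forces P to be three-dimensional). *)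
Definition fano {R : realType} (P : 'cV[R]_3 -> Prop) : Prop :=
  lattice_polytope P /\
  forall v : 'cV[int]_3, interior3 P (lat v) <-> v = 0.

Definition lattice_pts {R : realType} (P : 'cV[R]_3 -> Prop) (y : 'cV[R]_3) : Prop :=
  P y /\ exists v : 'cV[int]_3, y = lat v.

Definition minimal_fano {R : realType} (P : 'cV[R]_3 -> Prop) : Prop :=
  fano P /\
  forall rho, is_vertex P rho ->
    ~ fano (conv (fun y => lattice_pts P y /\ y <> rho)).

Definition span2 {R : realType} (u w : 'cV[R]_3) (x : 'cV[R]_3) : Prop :=
  exists a b : R, x = a *: u + b *: w.

(* (u, w) is a Z-basis of N ∩ L, where L = span_R(u, w) is a 2-dim linear
   subspace; i.e. e1 |-> u, e2 |-> w is a lattice isomorphism Z^2 -> N ∩ L. *)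
Definition plane_lattice_basis (R : realType) (u w : 'cV[int]_3) : Prop :=
  (forall a b : R, a *: lat u + b *: lat w = 0 -> a = 0 /\ b = 0) /\
  (forall x : 'cV[int]_3, span2 (lat u) (lat w) (lat x : 'cV[R]_3) ->
     exists m n : int, x = m *: u + n *: w).

Definition GL3Z_equiv {R : realType} (P Q : 'cV[R]_3 -> Prop) : Prop :=
  exists A : 'M[int]_3, A \in unitmx /\
    forall x, P x <-> exists y, Q y /\ x = map_mx (fun z : int => z%:~R) A *m y.

Definition P0_cols : seq 'cV[int]_3 :=
  [:: vec3 1 0 0; vec3 0 1 0; vec3 0 0 1; vec3 (-2) (-1) 0; vec3 (-1) 0 (-1)].

Definition P0 {R : realType} : 'cV[R]_3 -> Prop :=
  conv (fun y => exists2 v, v \in P0_cols & y = lat v).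

(* Main.v *)
Require Import Defs.
From HB Require Import structures.
From mathcomp Require Import all_boot all_order all_algebra.
From mathcomp Require Import reals.
From mathcomp Require Import ring lra zify.
From Stdlib Require ClassicalEpsilon.
Import Order.TTheory GRing.Theory Num.Theory.
Local Open Scope ring_scope.
Set Implicit Arguments. Unset Strict Implicit. Unset Printing Implicit Defensive.

Section Conv.
Variable R : realType.
Implicit Types (S C : 'cV[R]_3 -> Prop).

Definition convex C := forall x y (t : R), C x -> C y -> 0 <= t -> t <= 1 ->
  C (t *: x + (1 - t) *: y).

Lemma conv_in S x : S x -> conv S x.
Proof.
move=> Sx; exists 1%N, (fun _ => x), (fun _ => 1); split=> //; split=> [_|].
  exact: ler01.
by rewrite !big_ord1 scale1r.
Qed.

Lemma conv_convex S : convex (conv S).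
Proof.
move=> x y t [n [p [w [Sp [w0 [w1 ->]]]]]] [m [p' [w' [Sp' [w0' [w1' ->]]]]]] t0 t1.
exists (n + m)%N, (fun k => match split k with inl i => p i | inr j => p' j end),
  (fun k => match split k with inl i => t * w i | inr j => (1 - t) * w' j end).
split; first by move=> k; case: split.
split; first by move=> k; case: split => i; apply: mulr_ge0 => //; rewrite subr_ge0.
rewrite !big_split_ord /=.
have E1 i : split (lshift m i) = inl i by rewrite -[lshift m i]/(unsplit (inl i)) unsplitK.
have E2 j : split (rshift n j) = inr j by rewrite -[rshift n j]/(unsplit (inr j)) unsplitK.
split.
  under eq_bigr do rewrite E1. under [X in _ + X]eq_bigr do rewrite E2.
  by rewrite -!mulr_sumr w1 w1' !mulr1 addrC subrK.
apply/esym; under eq_bigr do rewrite E1. under [X in _ + X]eq_bigr do rewrite E2.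
rewrite !scaler_sumr; congr (_ + _); apply: eq_bigr => i _; by rewrite scalerA.
Qed.

Lemma conv_closed C S : convex C -> (forall x, S x -> C x) ->
  forall x, conv S x -> C x.
Proof.
move=> Cc SC x [n [p [w [Sp [w0 [w1 ->]]]]]].
elim: n p w Sp w0 w1 => [|n IH] p w Sp w0 w1.
  by move: w1; rewrite big_ord0 => /eqP; rewrite eq_sym oner_eq0.
rewrite big_ord_recr /=; rewrite big_ord_recr /= in w1.
set W := \sum_(i < n) w (widen_ord (leqnSn n) i) in w1 *.
have W0 : 0 <= W by apply: sumr_ge0 => i _.
have [/eqP WE|Wn] := boolP (W == 0).
  have wz i : w (widen_ord (leqnSn n) i) = 0.
    by move/eqP: WE; rewrite psumr_eq0 // => /allP /(_ i (mem_index_enum _)) /eqP.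
  rewrite big1 ?add0r; last by move=> i _; rewrite wz scale0r.
  move: w1; rewrite WE add0r => ->; rewrite scale1r; exact/SC/Sp.
have Wp : 0 < W by rewrite lt_def Wn W0.
have -> : \sum_(i < n) w (widen_ord (leqnSn n) i) *: p (widen_ord (leqnSn n) i) =
   W *: \sum_(i < n) (w (widen_ord (leqnSn n) i) / W) *: p (widen_ord (leqnSn n) i).
  rewrite scaler_sumr; apply: eq_bigr => i _; rewrite scalerA; congr (_ *: _).
  by rewrite mulrCA divff ?mulr1 // gt_eqF.
have -> : w ord_max = 1 - W by rewrite -w1 addrC addrK.
apply: Cc => //; last 2 first.
- exact/SC/Sp.
- by rewrite -w1 lerDl.
apply: (IH (fun i => p (widen_ord (leqnSn n) i)) (fun i => w (widen_ord (leqnSn n) i) / W)).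
- by move=> i; apply: Sp.
- by move=> i; apply: divr_ge0.
- by rewrite -mulr_suml divff // gt_eqF.
Qed.

Lemma conv_conv S x : conv (conv S) x -> conv S x.
Proof. exact: conv_closed (@conv_convex S) (fun _ h => h) x. Qed.

Lemma conv_mono S S' : (forall x, S x -> S' x) -> forall x, conv S x -> conv S' x.
Proof.
move=> H x [n [p [w [Sp [w0 [w1 ->]]]]]]; exists n, p, w; split=> //.
by move=> i; apply: H.
Qed.

End Conv.

Definition i1 : 'I_3 := @Ordinal 3 1 isT.
Definition i2 : 'I_3 := @Ordinal 3 2 isT.

Lemma cV3P (T : Type) (x y : 'cV[T]_3) :
  x ord0 ord0 = y ord0 ord0 -> x i1 ord0 = y i1 ord0 -> x i2 ord0 = y i2 ord0 -> x = y.
Proof.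
move=> h0 h1 h2; apply/matrixP => i j; rewrite (ord1 j).
case: i => [[|[|[|//]]]] Hi.
- by have -> : Ordinal Hi = ord0 by apply: val_inj.
- by have -> : Ordinal Hi = i1 by apply: val_inj.
- by have -> : Ordinal Hi = i2 by apply: val_inj.
Qed.

Definition det3 (T : comRingType) (x y z : 'cV[T]_3) : T :=
  x ord0 ord0 * (y i1 ord0 * z i2 ord0 - y i2 ord0 * z i1 ord0)
  - x i1 ord0 * (y ord0 ord0 * z i2 ord0 - y i2 ord0 * z ord0 ord0)
  + x i2 ord0 * (y ord0 ord0 * z i1 ord0 - y i1 ord0 * z ord0 ord0).

Ltac vec_ring := apply: cV3P; rewrite ?mxE /=; ring.

Lemma cramer (T : comRingType) (a b c x : 'cV[T]_3) :
  det3 a b c *: x = det3 x b c *: a + det3 a x c *: b + det3 a b x *: c.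
Proof. rewrite /det3; vec_ring. Qed.

Lemma det3_lin1 (T : comRingType) (b c x y : 'cV[T]_3) (s t : T) :
  det3 (s *: x + t *: y) b c = s * det3 x b c + t * det3 y b c.
Proof. rewrite /det3 !mxE; ring. Qed.
Lemma det3_lin2 (T : comRingType) (a c x y : 'cV[T]_3) (s t : T) :
  det3 a (s *: x + t *: y) c = s * det3 a x c + t * det3 a y c.
Proof. rewrite /det3 !mxE; ring. Qed.
Lemma det3_lin3 (T : comRingType) (a b x y : 'cV[T]_3) (s t : T) :
  det3 a b (s *: x + t *: y) = s * det3 a b x + t * det3 a b y.
Proof. rewrite /det3 !mxE; ring. Qed.

Section Lat.
Variable R : realType.

Lemma latE (v : 'cV[int]_3) i j : (lat v : 'cV[R]_3) i j = (v i j)%:~R.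
Proof. by rewrite /lat mxE. Qed.

Lemma latD (u v : 'cV[int]_3) : (lat (u + v) : 'cV[R]_3) = lat u + lat v.
Proof. by apply/matrixP => i j; rewrite !mxE intrD. Qed.
Lemma latN (u : 'cV[int]_3) : (lat (- u) : 'cV[R]_3) = - lat u.
Proof. by apply/matrixP => i j; rewrite !mxE intrN. Qed.
Lemma latB (u v : 'cV[int]_3) : (lat (u - v) : 'cV[R]_3) = lat u - lat v.
Proof. by rewrite latD latN. Qed.
Lemma latZ (a : int) (u : 'cV[int]_3) : (lat (a *: u) : 'cV[R]_3) = a%:~R *: lat u.
Proof. by apply/matrixP => i j; rewrite !mxE intrM. Qed.
Lemma lat0 : (lat 0 : 'cV[R]_3) = 0.
Proof. by apply/matrixP => i j; rewrite !mxE. Qed.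
Lemma lat_inj : injective (lat : 'cV[int]_3 -> 'cV[R]_3).
Proof.
move=> u v /matrixP h; apply/matrixP => i j; move: (h i j); rewrite !mxE.
exact: intr_inj.
Qed.
Lemma det3_lat (x y z : 'cV[int]_3) :
  det3 (lat x : 'cV[R]_3) (lat y) (lat z) = (det3 x y z)%:~R.
Proof. rewrite /det3 !latE !(intrD, intrB, intrM, intrN); ring. Qed.

End Lat.

Section Interior.
Variable R : realType.
Implicit Types (C : 'cV[R]_3 -> Prop).

Lemma conv4 C (P1 P2 P3 P4 : 'cV[R]_3) (a1 a2 a3 a4 : R) : convex C ->
  C P1 -> C P2 -> C P3 -> C P4 -> 0 <= a1 -> 0 <= a2 -> 0 <= a3 -> 0 <= a4 ->
  a1 + a2 + a3 + a4 = 1 -> C (a1 *: P1 + a2 *: P2 + a3 *: P3 + a4 *: P4).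
Proof.
move=> Cc h1 h2 h3 h4 b1 b2 b3 b4 s1.
apply: (conv_closed Cc (fun _ h => h)).
exists 4%N, (fun i : 'I_4 => nth P1 [:: P1; P2; P3; P4] i),
  (fun i : 'I_4 => nth a1 [:: a1; a2; a3; a4] i).
split; first by case=> [[|[|[|[|]]]]].
split; first by case=> [[|[|[|[|]]]]].
by rewrite !big_ord_recr !big_ord0 /= !add0r.
Qed.

Lemma conv3 C (P1 P2 P3 : 'cV[R]_3) (a1 a2 a3 : R) : convex C ->
  C P1 -> C P2 -> C P3 -> 0 <= a1 -> 0 <= a2 -> 0 <= a3 ->
  a1 + a2 + a3 = 1 -> C (a1 *: P1 + a2 *: P2 + a3 *: P3).
Proof.
move=> Cc h1 h2 h3 b1 b2 b3 s1.
have := conv4 Cc h1 h2 h3 h1 b1 b2 b3 (lexx 0).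
by rewrite addr0 scale0r addr0; apply.
Qed.

Lemma conv2 C (P1 P2 : 'cV[R]_3) (a1 a2 : R) : convex C ->
  C P1 -> C P2 -> 0 <= a1 -> 0 <= a2 ->
  a1 + a2 = 1 -> C (a1 *: P1 + a2 *: P2).
Proof.
move=> Cc h1 h2 b1 b2 s1.
have := conv3 Cc h1 h2 h1 b1 b2 (lexx 0).
by rewrite addr0 scale0r addr0; apply.
Qed.

Definition cof (b c : 'cV[R]_3) : R :=
  `|b i1 ord0 * c i2 ord0 - b i2 ord0 * c i1 ord0|
  + `|b ord0 ord0 * c i2 ord0 - b i2 ord0 * c ord0 ord0|
  + `|b ord0 ord0 * c i1 ord0 - b i1 ord0 * c ord0 ord0|.

Lemma cof_ge0 b c : 0 <= cof b c.
Proof. by rewrite /cof !addr_ge0. Qed.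

Lemma det3_bound (x b c : 'cV[R]_3) (e : R) : (forall i, `|x i ord0| <= e) ->
  `|det3 x b c| <= e * cof b c.
Proof.
move=> hx; rewrite /det3 /cof.
have k (i : 'I_3) (Z : R) : `|x i ord0 * Z| <= e * `|Z|.
  by rewrite normrM ler_wpM2r.
rewrite [e * _]mulrDr [e * (_ + _)]mulrDr.
apply: (le_trans (ler_normD _ _)); apply: lerD; last exact: k.
apply: (le_trans (ler_normD _ _)); apply: lerD; first exact: k.
by rewrite normrN; apply: k.
Qed.

Lemma pick_sign C (m u : 'cV[R]_3) (al : R) : C (m + u) -> C (m - u) ->
  exists P, C P /\ `|al| *: P = `|al| *: m + al *: u.
Proof.
move=> h1 h2; have [a0|a0] := leP 0 al.
  by exists (m + u); split=> //; rewrite ger0_norm // scalerDr.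
exists (m - u); split=> //; rewrite ltr0_norm //; apply: cV3P; rewrite !mxE; ring.
Qed.

Lemma cramer_div (a b c x : 'cV[R]_3) : det3 a b c != 0 ->
  x = (det3 x b c / det3 a b c) *: a + (det3 a x c / det3 a b c) *: b
      + (det3 a b x / det3 a b c) *: c.
Proof.
move=> D0; have h := cramer a b c x.
apply: (scalerI D0); rewrite h !scalerDr !scalerA.
congr (_ *: _ + _ *: _ + _ *: _); by rewrite mulrCA divff // mulr1.
Qed.

Lemma det3_swap12 (T : comRingType) (a b c : 'cV[T]_3) : det3 a b c = - det3 b a c.
Proof. rewrite /det3; ring. Qed.
Lemma det3_cyc (T : comRingType) (a b c : 'cV[T]_3) : det3 a b c = det3 c a b.
Proof. rewrite /det3; ring. Qed.

Lemma frame_half C (m u w p d : 'cV[R]_3) :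
  convex C -> C (m + u) -> C (m - u) -> C (m + w) -> C (m - w) -> C (m + p) ->
  det3 u w p != 0 -> 0 <= det3 u w d / det3 u w p ->
  `|det3 d w p| + `|det3 u d p| + `|det3 u w d| <= `|det3 u w p| ->
  C (m + d).
Proof.
move=> Cc hu1 hu2 hw1 hw2 hp D0 g0 hb.
set D := det3 u w p in D0 g0 hb.
set al := det3 d w p / D; set be := det3 u d p / D; set ga := det3 u w d / D.
have Ed : d = al *: u + be *: w + ga *: p by exact: cramer_div.
have [P1 [C1 E1]] := pick_sign al hu1 hu2.
have [P2 [C2 E2]] := pick_sign be hw1 hw2.
have Dn : 0 < `|D| by rewrite normr_gt0.
have hs : `|al| + `|be| + ga <= 1.
  rewrite -[ga]ger0_norm // /al /be /ga !normrM !normfV -!mulrDl.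
  by rewrite ler_pdivrMr // mul1r.
have a4 : 0 <= 1 - `|al| - `|be| - ga by lra.
have Cm : C m.
  have -> : m = 2^-1 *: (m + u) + 2^-1 *: (m - u) by apply: cV3P; rewrite !mxE; field.
  by apply: conv2 => //; [rewrite invr_ge0 ler0n|rewrite invr_ge0 ler0n|field].
have := conv4 Cc C1 C2 hp Cm (normr_ge0 al) (normr_ge0 be) g0 a4 _.
rewrite E1 E2.
have -> : `|al| + `|be| + ga + (1 - `|al| - `|be| - ga) = 1 by ring.
move=> /(_ erefl).
suff -> : `|al| *: m + al *: u + (`|be| *: m + be *: w) + ga *: (m + p) +
          (1 - `|al| - `|be| - ga) *: m = m + d by [].
by rewrite Ed; apply: cV3P; rewrite !mxE; ring.
Qed.


End Interior.

Section Interior2.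
Variable R : realType.
Implicit Types (C : 'cV[R]_3 -> Prop).

Lemma det3_sum_bound (u w p d : 'cV[R]_3) (e : R) : (forall i, `|d i ord0| <= e) ->
  `|det3 d w p| + `|det3 u d p| + `|det3 u w d| <= e * (cof w p + cof u p + cof u w).
Proof.
move=> he; rewrite (det3_swap12 u d p) normrN (det3_cyc u w d) [e * _]mulrDr [e * (_ + _)]mulrDr.
by apply: lerD; [apply: lerD|]; apply: det3_bound.
Qed.

Lemma interior_frame C (m u w p q : 'cV[R]_3) :
  convex C -> C (m + u) -> C (m - u) -> C (m + w) -> C (m - w) ->
  C (m + p) -> C (m + q) ->
  0 < det3 u w p -> det3 u w q < 0 -> interior3 C m.
Proof.
move=> Cc hu1 hu2 hw1 hw2 hp hq Dp Dq.
have Kp0 : 0 <= cof w p + cof u p + cof u w by rewrite !addr_ge0 // cof_ge0.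
have Kq0 : 0 <= cof w q + cof u q + cof u w by rewrite !addr_ge0 // cof_ge0.
set Kp := cof w p + cof u p + cof u w in Kp0 *.
set Kq := cof w q + cof u q + cof u w in Kq0 *.
exists (Order.min (det3 u w p / (Kp + 1)) (- det3 u w q / (Kq + 1))).
split.
  rewrite lt_min; apply/andP; split; apply: divr_gt0 => //; try lra.
set e := Order.min _ _ => y hy.
have e1 : e <= det3 u w p / (Kp + 1) by rewrite ge_min lexx.
have e2 : e <= - det3 u w q / (Kq + 1) by rewrite ge_min lexx orbT.
have e0 : 0 <= e by apply: le_trans (normr_ge0 _) (ltW (hy ord0)).
have he : forall i, `|(y - m) i ord0| <= e by move=> i; rewrite !mxE; move: (hy i) => /ltW.
have -> : y = m + (y - m) by rewrite addrC subrK.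
set d := y - m in he *.
have [g|g] := leP 0 (det3 u w d).
  apply: (frame_half Cc hu1 hu2 hw1 hw2 hp); first by rewrite gt_eqF.
    by apply: divr_ge0 => //; apply: ltW.
  apply: le_trans (det3_sum_bound u w p he) _.
  rewrite ler_pdivlMr in e1; last lra.
  rewrite gtr0_norm //; rewrite mulrDr mulr1 in e1; rewrite -/Kp; lra.
apply: (frame_half Cc hu1 hu2 hw1 hw2 hq); first by rewrite lt_eqF.
  rewrite -mulrNN -invrN; apply: divr_ge0; rewrite oppr_ge0; exact: ltW.
apply: le_trans (det3_sum_bound u w q he) _.
rewrite ler_pdivlMr in e2; last lra.
rewrite ltr0_norm //; rewrite mulrDr mulr1 in e2; rewrite -/Kq; lra.
Qed.

End Interior2.

Definition pb (Q : Prop) : bool :=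
  if ClassicalEpsilon.excluded_middle_informative Q then true else false.
Lemma pbP (Q : Prop) : pb Q <-> Q.
Proof. by rewrite /pb; case: ClassicalEpsilon.excluded_middle_informative. Qed.

Definition rng (N : nat) : seq int := [seq (i%:Z - N%:Z) | i <- iota 0 (2 * N).+1].
Definition box (N : nat) : seq 'cV[int]_3 :=
  flatten [seq flatten [seq [seq vec3 a b c | c <- rng N] | b <- rng N] | a <- rng N].

Lemma mem_rng N (z : int) : `|z| <= N%:Z -> z \in rng N.
Proof.
move=> hz; apply/mapP; exists (absz (z + N%:Z)).
  rewrite mem_iota; lia.
rewrite -[LHS](addrK N%:Z); congr (_ - _); rewrite gez0_abs //; lia.

Qed.

Lemma vec3E (v : 'cV[int]_3) : v = vec3 (v ord0 ord0) (v i1 ord0) (v i2 ord0).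
Proof. by apply: cV3P; rewrite !mxE. Qed.

Lemma mem_box N (v : 'cV[int]_3) : (forall i, `|v i ord0| <= N%:Z) -> v \in box N.
Proof.
move=> hv; rewrite (vec3E v); apply/flatten_mapP; exists (v ord0 ord0); first exact: mem_rng.
apply/flatten_mapP; exists (v i1 ord0); first exact: mem_rng.
by apply: map_f; exact: mem_rng.
Qed.

Section Fin.
Variable R : realType.
Implicit Types (P Q C : 'cV[R]_3 -> Prop).

Lemma lp_convex P : lattice_polytope P -> convex P.
Proof.
move=> [s hs] x y t Px Py t0 t1; apply/hs; apply: conv_convex => //; exact/hs.
Qed.

Lemma lp_conv P : lattice_polytope P -> forall Q, (forall y, Q y -> P y) ->
  forall x, conv Q x -> P x.
Proof. by move=> hP Q hQ; apply: conv_closed (lp_convex hP) hQ. Qed.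

Lemma lp_bound P : lattice_polytope P -> exists N : nat,
  forall v : 'cV[int]_3, P (lat v) -> forall i, `|v i ord0| <= N%:Z.
Proof.
move=> [s hs].
exists (\sum_(v <- s) (`|v ord0 ord0| + `|v i1 ord0| + `|v i2 ord0|)%N)%N.
set N := (\sum_(v <- s) _)%N.
have bnd : forall x, conv (fun y => exists2 v, v \in s & y = lat v) x ->
    forall i, `|x i ord0| <= (N%:Z)%:~R :> R.
  apply: conv_closed.
    move=> x y t hx hy t0 t1 i; rewrite !mxE.
    apply: le_trans (ler_normD _ _) _; rewrite !normrM (ger0_norm t0).
    rewrite (ger0_norm (_ : 0 <= 1 - t)); last by rewrite subr_ge0.
    have := hx i; have := hy i.
    have : 0 <= 1 - t by rewrite subr_ge0.
    move: (`|x i ord0|) (`|y i ord0|) => a b ht hb ha.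
    nra.
  move=> y [v vs ->] i; rewrite latE -intr_norm ler_int.
  have : (`|v i ord0|%N <= N)%N.
    rewrite /N (big_rem _ vs) /=.
    apply: leq_trans (leq_addr _ _).
    case: i => [[|[|[|//]]]] Hi.
    - have -> : Ordinal Hi = ord0 by apply: val_inj.
      lia. 
    - have -> : Ordinal Hi = i1 by apply: val_inj.
      lia.
    - have -> : Ordinal Hi = i2 by apply: val_inj.
      lia.
  move=> h; rewrite -abszE; by rewrite lez_nat.
move=> v /hs /bnd h i; move: (h i); rewrite latE -intr_norm ler_int. exact.
Qed.

End Fin.

Section Fano.
Variable R : realType.
Implicit Types (P Q C : 'cV[R]_3 -> Prop).

Lemma finite_lattice P Q : lattice_polytope P -> (forall y, Q y -> lattice_pts P y) ->
  lattice_polytope (conv Q).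
Proof.
move=> hP hQ; have [N hN] := lp_bound hP.
exists [seq v <- box N | pb (Q (lat v))] => x; split; apply: conv_mono.
  move=> y Qy; have [Py [v ev]] := hQ y Qy; exists v => //.
  rewrite mem_filter; apply/andP; split; first by apply/pbP; rewrite -ev.
  by apply: mem_box; apply: hN; rewrite -ev.
by move=> y [v]; rewrite mem_filter => /andP [/pbP h _] ->.
Qed.

Lemma interior3_mono C C' (x : 'cV[R]_3) : (forall y, C y -> C' y) ->
  interior3 C x -> interior3 C' x.
Proof. by move=> h [e [e0 he]]; exists e; split=> // y /he /h. Qed.

Lemma fano_sub P Q : fano P -> (forall y, Q y -> lattice_pts P y) ->
  interior3 (conv Q) 0 -> fano (conv Q).
Proof.
move=> [hP hF] hQ h0; split; first exact: finite_lattice hQ.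
move=> v; split.
  move=> hv; apply/hF; apply: interior3_mono hv.
  by apply: (lp_conv hP) => y /hQ [].
by move=> ->; rewrite lat0.
Qed.

Definition Qm P (rho : 'cV[R]_3) := fun y => lattice_pts P y /\ y <> rho.

Lemma minimal_contra P rho : minimal_fano P -> is_vertex P rho ->
  interior3 (conv (Qm P rho)) 0 -> False.
Proof.
move=> [hF hM] hv h0; apply: (hM rho hv); apply: (fano_sub hF) => //.
by move=> y [].
Qed.

Lemma minimal_frame P rho (u w p q : 'cV[R]_3) : minimal_fano P -> is_vertex P rho ->
  conv (Qm P rho) u -> conv (Qm P rho) (- u) ->
  conv (Qm P rho) w -> conv (Qm P rho) (- w) ->
  conv (Qm P rho) p -> conv (Qm P rho) q ->
  0 < det3 u w p -> det3 u w q < 0 -> False.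
Proof.
move=> hm hv hu1 hu2 hw1 hw2 hp hq D1 D2; apply: (minimal_contra hm hv).
apply: (interior_frame (u:=u) (w:=w) (p:=p) (q:=q)) => //; try by rewrite add0r.
exact: conv_convex.
Qed.

End Fano.

Section Config.
Variable R : realType.
Variable P : 'cV[R]_3 -> Prop.
Hypothesis hm : minimal_fano P.

Lemma P_lp : lattice_polytope P.
Proof. by case: hm => [[]]. Qed.
Lemma P_convex : convex P.
Proof. exact: lp_convex P_lp. Qed.

Lemma inQm (rho : 'cV[R]_3) (x : 'cV[int]_3) : P (lat x) -> lat x <> rho ->
  conv (Qm P rho) (lat x).
Proof. by move=> Px xr; apply: conv_in; split=> //; split=> //; exists x. Qed.

Lemma latne (x v : 'cV[int]_3) : x <> v -> (lat x : 'cV[R]_3) <> lat v.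
Proof. by move=> h /lat_inj. Qed.

Lemma sign1 (a b v x y : 'cV[int]_3) :
  P (lat a) -> P (lat b) -> P (lat (- a - b)) -> is_vertex P (lat v) ->
  a <> v -> b <> v -> - a - b <> v -> P (lat x) -> P (lat y) -> x <> v -> y <> v ->
  0 < det3 a b x -> det3 a b y < 0 -> False.
Proof.
move=> Pa Pb Pc hv av bv cv Px Py xv yv D1 D2.
have Ca := inQm Pa (latne av); have Cb := inQm Pb (latne bv).
have Cc := inQm Pc (latne cv); have Cx := inQm Px (latne xv).
have Cy := inQm Py (latne yv).
have Cv := @conv_convex R (Qm P (lat v)).
have h6 : (0 : R) <= 6^-1 by rewrite invr_ge0 ler0n.
have h2 : (0 : R) <= 2^-1 by rewrite invr_ge0 ler0n.
have h23 : (0 : R) <= 2 / 3 by rewrite divr_ge0 ?ler0n.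
apply: (minimal_frame (u := 2^-1 *: lat a) (w := 2^-1 *: lat b) (p := lat x) (q := lat y) hm hv).
- have -> : 2^-1 *: lat a = (2/3) *: lat a + 6^-1 *: lat b + 6^-1 *: (lat (- a - b) : 'cV[R]_3).
    by rewrite latB latN; apply: cV3P; rewrite !mxE; field.
  by apply: conv3 => //; field.
- have -> : - (2^-1 *: lat a) = 2^-1 *: lat b + 2^-1 *: (lat (- a - b) : 'cV[R]_3).
    by rewrite latB latN; apply: cV3P; rewrite !mxE; field.
  by apply: conv2 => //; field.
- have -> : 2^-1 *: lat b = 6^-1 *: lat a + (2/3) *: lat b + 6^-1 *: (lat (- a - b) : 'cV[R]_3).
    by rewrite latB latN; apply: cV3P; rewrite !mxE; field.
  by apply: conv3 => //; field.
- have -> : - (2^-1 *: lat b) = 2^-1 *: lat a + 2^-1 *: (lat (- a - b) : 'cV[R]_3).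
    by rewrite latB latN; apply: cV3P; rewrite !mxE; field.
  by apply: conv2 => //; field.
- by [].
- by [].
- have -> : det3 (2^-1 *: lat a) (2^-1 *: lat b) (lat x) = 4^-1 * (det3 a b x)%:~R :> R.
    by rewrite -det3_lat /det3 !mxE; field.
  by rewrite mulr_gt0 ?invr_gt0 ?ltr0n // ltr0z.
- have -> : det3 (2^-1 *: lat a) (2^-1 *: lat b) (lat y) = 4^-1 * (det3 a b y)%:~R :> R.
    by rewrite -det3_lat /det3 !mxE; field.
  by rewrite pmulr_rlt0 ?invr_gt0 ?ltr0n // ltrz0.
Qed.

End Config.

Section Config2.
Variable R : realType.
Variable P : 'cV[R]_3 -> Prop.
Hypothesis hm : minimal_fano P.

Lemma latf (d e : 'cV[int]_3) :
  (lat (- (2%:R *: d) - e) : 'cV[R]_3) = - (2 *: lat d) - lat e.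
Proof. apply: cV3P; rewrite !mxE; ring. Qed.

Lemma sign2 (d e v x y : 'cV[int]_3) :
  P (lat d) -> P (lat (- d)) -> P (lat e) -> P (lat (- (2%:R *: d) - e)) ->
  is_vertex P (lat v) ->
  d <> v -> - d <> v -> e <> v -> - (2%:R *: d) - e <> v ->
  P (lat x) -> P (lat y) -> x <> v -> y <> v ->
  0 < det3 d e x -> det3 d e y < 0 -> False.
Proof.
move=> Pd Pd' Pe Pf hv dv dv' ev fv Px Py xv yv D1 D2.
have Cd := inQm Pd (latne dv); have Cd' := inQm Pd' (latne dv').
have Ce := inQm Pe (latne ev); have Cf := inQm Pf (latne fv).
have Cx := inQm Px (latne xv); have Cy := inQm Py (latne yv).
have Cv := @conv_convex R (Qm P (lat v)).
have h2 : (0 : R) <= 2^-1 by rewrite invr_ge0 ler0n.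
apply: (minimal_frame (u := lat d) (w := 2^-1 *: lat d + 2^-1 *: lat e)
   (p := lat x) (q := lat y) hm hv) => //.
- by rewrite -latN.
- by apply: conv2 => //; field.
- have -> : - (2^-1 *: lat d + 2^-1 *: lat e) =
     2^-1 *: lat d + 2^-1 *: (lat (- (2%:R *: d) - e) : 'cV[R]_3).
    by rewrite latf; apply: cV3P; rewrite !mxE; field.
  by apply: conv2 => //; field.
- have -> : det3 (lat d) (2^-1 *: lat d + 2^-1 *: lat e) (lat x) =
     2^-1 * (det3 d e x)%:~R :> R.
    by rewrite -det3_lat /det3 !mxE; field.
  by rewrite mulr_gt0 ?invr_gt0 ?ltr0n // ltr0z.
- have -> : det3 (lat d) (2^-1 *: lat d + 2^-1 *: lat e) (lat y) =
     2^-1 * (det3 d e y)%:~R :> R.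
    by rewrite -det3_lat /det3 !mxE; field.
  by rewrite pmulr_rlt0 ?invr_gt0 ?ltr0n // ltrz0.
Qed.

End Config2.

Definition crossv (T : comRingType) (x y : 'cV[T]_3) : 'cV[T]_3 :=
  \col_(i < 3) nth 0 [:: x i1 ord0 * y i2 ord0 - x i2 ord0 * y i1 ord0;
                        x i2 ord0 * y ord0 ord0 - x ord0 ord0 * y i2 ord0;
                        x ord0 ord0 * y i1 ord0 - x i1 ord0 * y ord0 ord0] i.

Definition indep (R : realType) (x y : 'cV[R]_3) :=
  forall al be : R, al *: x + be *: y = 0 -> al = 0 /\ be = 0.

Section LinAlg.
Variable R : realType.

Lemma indep_det (x y : 'cV[R]_3) : indep x y -> 0 < det3 x y (crossv x y).
Proof.
move=> hi.
have -> : det3 x y (crossv x y) =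
   (crossv x y ord0 ord0) ^+ 2 + (crossv x y i1 ord0) ^+ 2 + (crossv x y i2 ord0) ^+ 2.
  by rewrite /det3 !mxE /=; ring.
set c0 := crossv x y ord0 ord0; set c1 := crossv x y i1 ord0; set c2 := crossv x y i2 ord0.
have [h0|h0] := eqVneq c0 0; last first.
  have : 0 < c0 ^+ 2 by rewrite exprn_even_gt0.
  have := sqr_ge0 c1; have := sqr_ge0 c2; lra.
have [h1|h1] := eqVneq c1 0; last first.
  have : 0 < c1 ^+ 2 by rewrite exprn_even_gt0.
  have := sqr_ge0 c0; have := sqr_ge0 c2; lra.
have [h2|h2] := eqVneq c2 0; last first.
  have : 0 < c2 ^+ 2 by rewrite exprn_even_gt0.
  have := sqr_ge0 c1; have := sqr_ge0 c0; lra.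
exfalso.
move: h0 h1 h2; rewrite /c0 /c1 /c2 !mxE /= => h0 h1 h2.
have [x0|x0] := eqVneq (x ord0 ord0) 0; last first.
  have E : y ord0 ord0 *: x + (- x ord0 ord0) *: y = 0.
    by apply: cV3P; rewrite !mxE; [ring| |]; [move: h2 | move: h1]; move/eqP; rewrite subr_eq0 => /eqP; lra.
  have [_ hb] := hi _ _ E.
  by move/eqP: hb; rewrite oppr_eq0 (negbTE x0).
have [x1|x1] := eqVneq (x i1 ord0) 0; last first.
  have E : y i1 ord0 *: x + (- x i1 ord0) *: y = 0.
    by apply: cV3P; rewrite !mxE; [| ring |]; [move: h2 | move: h0]; move/eqP; rewrite subr_eq0 => /eqP; lra.
  have [_ hb] := hi _ _ E.
  by move/eqP: hb; rewrite oppr_eq0 (negbTE x1).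
have [x2|x2] := eqVneq (x i2 ord0) 0; last first.
  have E : y i2 ord0 *: x + (- x i2 ord0) *: y = 0.
    by apply: cV3P; rewrite !mxE; [| | ring]; [move: h1 | move: h0]; move/eqP; rewrite subr_eq0 => /eqP; lra.
  have [_ hb] := hi _ _ E.
  by move/eqP: hb; rewrite oppr_eq0 (negbTE x2).
have E : 1 *: x + 0 *: y = 0 by apply: cV3P; rewrite !mxE ?x0 ?x1 ?x2; ring.
have [h _] := hi _ _ E.
by move/eqP: h; rewrite oner_eq0.
Qed.

Lemma span_of_det (x y z : 'cV[R]_3) : indep x y -> det3 x y z = 0 -> span2 x y z.
Proof.
move=> hi hz; have hD := indep_det hi.
have := cramer_div z (negbT (gt_eqF hD)); rewrite hz mul0r scale0r addr0 => ->.
by exists (det3 z y (crossv x y) / det3 x y (crossv x y)), (det3 x z (crossv x y) / det3 x y (crossv x y)).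
Qed.

Lemma det_of_span (x y z : 'cV[R]_3) : span2 x y z -> det3 x y z = 0.
Proof. by move=> [al [be ->]]; rewrite /det3 !mxE; ring. Qed.

Lemma pb_indep (d e : 'cV[int]_3) : plane_lattice_basis R d e -> indep (lat d : 'cV[R]_3) (lat e).
Proof. by case. Qed.

Lemma lattice_plane (d e x : 'cV[int]_3) : plane_lattice_basis R d e -> det3 d e x = 0 ->
  exists m n : int, x = m *: d + n *: e.
Proof.
move=> [hi hl] h; apply: hl; apply: span_of_det => //.
by rewrite det3_lat h.
Qed.

Lemma indep_int (d e : 'cV[int]_3) (al be : int) : plane_lattice_basis R d e ->
  al *: d + be *: e = 0 -> al = 0 /\ be = 0.
Proof.
move=> [hi _] h; have [] := hi al%:~R be%:~R.
  by rewrite -!latZ -latD h lat0.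
by move/eqP; rewrite intr_eq0 => /eqP -> /eqP; rewrite intr_eq0 => /eqP ->.
Qed.

End LinAlg.

Definition ev0 : 'cV[int]_3 := vec3 1 0 0.
Definition ev1 : 'cV[int]_3 := vec3 0 1 0.
Definition ev2 : 'cV[int]_3 := vec3 0 0 1.

Lemma det3_comb (T : comRingType) (d e x : 'cV[T]_3) (m0 k0 t0 m1 k1 t1 m2 k2 t2 : T) :
  det3 (m0 *: d + k0 *: e + t0 *: x) (m1 *: d + k1 *: e + t1 *: x)
       (m2 *: d + k2 *: e + t2 *: x) =
  det3 d e x * (m0 * (k1 * t2 - t1 * k2) - k0 * (m1 * t2 - t1 * m2) + t0 * (m1 * k2 - k1 * m2)).
Proof. rewrite /det3 !mxE; ring. Qed.

Section Basis.
Variable R : realType.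

Lemma complete_basis (d e : 'cV[int]_3) : plane_lattice_basis R d e ->
  exists g, det3 d e g = 1.
Proof.
move=> hde.
set n0 := d i1 ord0 * e i2 ord0 - d i2 ord0 * e i1 ord0.
set n1 := d i2 ord0 * e ord0 ord0 - d ord0 ord0 * e i2 ord0.
set n2 := d ord0 ord0 * e i1 ord0 - d i1 ord0 * e ord0 ord0.
case: (Bezoutz n0 n1) => u0 [v0 h01].
case: (Bezoutz (gcdz n0 n1) n2) => u1 [v1 h2].
set g0 := gcdz (gcdz n0 n1) n2 in h2.
set x0 := vec3 (u1 * u0) (u1 * v0) v1.
have hx0 : det3 d e x0 = g0.
  by rewrite -h2 -h01 /det3 /x0 !mxE /= /n0 /n1 /n2; ring.
have dv0 : (g0 %| n0)%Z by apply: dvdz_trans (dvdz_gcdl _ _) (dvdz_gcdl _ _).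
have dv1 : (g0 %| n1)%Z by apply: dvdz_trans (dvdz_gcdl _ _) (dvdz_gcdr _ _).
have dv2 : (g0 %| n2)%Z by apply: dvdz_gcdr.
have key (ev : 'cV[int]_3) (ni : int) : det3 d e ev = ni -> (g0 %| ni)%Z ->
    exists m k : int, ev = m *: d + k *: e + (ni %/ g0)%Z *: x0.
  move=> hev hdv.
  have hz : det3 d e (ev - (ni %/ g0)%Z *: x0) = 0.
    have -> : det3 d e (ev - (ni %/ g0)%Z *: x0) = det3 d e ev - (ni %/ g0)%Z * det3 d e x0.
      by rewrite /det3 !mxE; ring.
    by rewrite hev hx0 divzK // subrr.
  have [m [k hmk]] := lattice_plane hde hz.
  by exists m, k; rewrite -hmk subrK.
have hh0 : det3 d e ev0 = n0 by rewrite /det3 !mxE /= /n0; ring.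
have [m0 [k0 E0]] := key ev0 n0 hh0 dv0.
have hh1 : det3 d e ev1 = n1 by rewrite /det3 !mxE /= /n1; ring.
have [m1 [k1 E1]] := key ev1 n1 hh1 dv1.
have hh2 : det3 d e ev2 = n2 by rewrite /det3 !mxE /= /n2; ring.
have [m2 [k2 E2]] := key ev2 n2 hh2 dv2.
have : det3 ev0 ev1 ev2 = 1 by rewrite /det3 !mxE /=; ring.
rewrite E0 E1 E2 det3_comb hx0 => h.
have g0ge : 0 <= g0 by rewrite /g0 /gcdz.
exists x0; rewrite hx0.
move: h; move: (_ - _ + _) => D' h.
clear -g0ge h; move: g0ge h; move: g0 => G G0 h.
have [hD|hD] : D' <= 0 \/ 1 <= D' by lia.
  nia.
nia.
Qed.

Lemma pb_rot (a b : 'cV[int]_3) : plane_lattice_basis R a b ->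
  plane_lattice_basis R b (- a - b).
Proof.
move=> [hi hl]; split.
  move=> al be; rewrite latB latN => h.
  have E : (- be) *: (lat a : 'cV[R]_3) + (al - be) *: lat b = 0.
    by rewrite -h; apply: cV3P; rewrite !mxE; ring.
  have [h1 h2] := hi _ _ E.
  lra.
move=> x [al [be hx]].
have hs : span2 (lat a : 'cV[R]_3) (lat b) (lat x).
  exists (- be), (al - be); rewrite hx latB latN; apply: cV3P; rewrite !mxE; ring.
have [m [n ->]] := hl x hs.
by exists (n - m), (- m); apply: cV3P; rewrite !mxE; ring.
Qed.

Lemma H12_of (a b d e : 'cV[int]_3) : plane_lattice_basis R a b ->
  plane_lattice_basis R d e ->
  ~ (forall x : 'cV[R]_3, span2 (lat a) (lat b) x <-> span2 (lat d) (lat e) x) ->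
  ~ (det3 a b d = 0 /\ det3 a b e = 0).
Proof.
move=> hab hde H [hd he]; apply: H => x; split.
  move=> [a3 [b3 hx]].
  have [a1 [b1 hD]] : span2 (lat a : 'cV[R]_3) (lat b) (lat d).
    by apply: span_of_det; [exact: pb_indep|rewrite det3_lat hd].
  have [a2 [b2 hE]] : span2 (lat a : 'cV[R]_3) (lat b) (lat e).
    by apply: span_of_det; [exact: pb_indep|rewrite det3_lat he].
  apply: span_of_det; first exact: pb_indep.
  by rewrite hx hD hE /det3 !mxE; ring.
move=> [al [be hx]]; apply: span_of_det; first exact: pb_indep.
by rewrite hx det3_lin3 !det3_lat hd he !mulr0 addr0.
Qed.

End Basis.
Definition ineqZ (u v K : int) := [/\ u + v <= K - 1, v - u <= K - 1 & u - 3 * v <= K - 1].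

Lemma num_core (a b K : int) : 0 <= a -> a < K -> 0 <= b -> b < K ->
  (2 * a = K /\ 2 * b = K) \/ exists i j : int, ineqZ (a + i * K) (b + j * K) K.
Proof.
move=> a0 aK b0 bK.
have [h|h] : a + b <= K - 1 \/ K <= a + b by lia.
  by right; exists 0, 0; split; lia.
have [h2|h2] : b < a \/ a <= b by lia.
  by right; exists (-1), 0; split; lia.
have [h3|h3] : a + K + 1 <= 3 * b \/ 3 * b <= a + K by lia.
  by right; exists (-1), (-1); split; lia.
left; lia.
Qed.

Lemma num_main (p q K : int) : 2 <= K ->
  (exists X Y, ineqZ (K * X - p) (K * Y - q) K) \/
  (exists X Y, ineqZ (K * X + 1 + p) (K * Y + q) K).
Proof.
move=> K2; have K0 : K != 0 by lia.
have Kp : 0 < K by lia.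
have ea := divz_eq (- p) K; have eb := divz_eq (- q) K.
have ec := divz_eq (1 + p) K; have ed := divz_eq q K.
have := modz_ge0 (- p) K0; have := ltz_pmod (- p) Kp.
have := modz_ge0 (- q) K0; have := ltz_pmod (- q) Kp.
have := modz_ge0 (1 + p) K0; have := ltz_pmod (1 + p) Kp.
have := modz_ge0 q K0; have := ltz_pmod q Kp.
move: ea eb ec ed.
move: ((- p) %/ K)%Z ((- p) %% K)%Z ((- q) %/ K)%Z ((- q) %% K)%Z
      ((1 + p) %/ K)%Z ((1 + p) %% K)%Z (q %/ K)%Z (q %% K)%Z.
move=> t a t' b tc ac tq bc ea eb ec ed h1 h2 h3 h4 h5 h6 h7 h8.
have [[ha hb]|[i [j [H1 H2 H3]]]] := @num_core a b K h8 h7 h6 h5; last first.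
  left; exists (- t + i), (- t' + j).
  have -> : K * (- t + i) - p = a + i * K by lia.
  have -> : K * (- t' + j) - q = b + j * K by lia.
  by split.
have [[hc hd]|[i [j [H1 H2 H3]]]] := @num_core ac bc K h4 h3 h2 h1; last first.
  right; exists (- tc + i), (- tq + j).
  have -> : K * (- tc + i) + 1 + p = ac + i * K by lia.
  have -> : K * (- tq + j) + q = bc + j * K by lia.
  by split.
exfalso.
have : 1 = (t + tc + 1) * K by lia.
nia.
Qed.

Section Cand.
Variable R : realType.

Lemma cand (C : 'cV[R]_3 -> Prop) (z D E : 'cV[R]_3) (K u v : R) :
  convex C -> C z -> C D -> C E -> C (- (2 *: D) - E) -> 1 <= K ->
  u + v <= K - 1 -> v - u <= K - 1 -> u - 3 * v <= K - 1 ->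
  C (K^-1 *: (z + u *: D + v *: E)).
Proof.
move=> Cc Cz CD CE CF K1 h1 h2 h3.
have K0 : 0 < K by lra.
have K0' : K != 0 by rewrite gt_eqF.
have := conv4 Cc Cz CD CE CF (a1 := K^-1) (a2 := (K - 1 + u - v) / (2 * K))
  (a3 := (K - 1 - u + 3 * v) / (4 * K)) (a4 := (K - 1 - u - v) / (4 * K)).
have -> : K^-1 *: z + (K - 1 + u - v) / (2 * K) *: D + (K - 1 - u + 3 * v) / (4 * K) *: E +
   (K - 1 - u - v) / (4 * K) *: (- (2 *: D) - E) = K^-1 *: (z + u *: D + v *: E).
  by apply: cV3P; rewrite !mxE; field.
apply.
- by rewrite invr_ge0 ltW.
- by apply: divr_ge0; lra.
- by apply: divr_ge0; lra.
- by apply: divr_ge0; lra.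
- by field.
Qed.

End Cand.

Ltac ivec := apply: cV3P; rewrite !mxE /=; ring.

Section Main.
Variable R : realType.
Variable P : 'cV[R]_3 -> Prop.
Hypothesis hm : minimal_fano P.
Variables a b d e : 'cV[int]_3.
Hypothesis hab : plane_lattice_basis R a b.
Hypothesis hde : plane_lattice_basis R d e.
Hypothesis va : is_vertex P (lat a).
Hypothesis vb : is_vertex P (lat b).
Hypothesis vc : is_vertex P (lat (- a - b)).
Hypothesis vd : is_vertex P (lat d).
Hypothesis ve : is_vertex P (lat e).
Hypothesis vf : is_vertex P (lat (- (2%:R *: d) - e)).
Hypothesis H12 : ~ (det3 a b d = 0 /\ det3 a b e = 0).

Local Notation c := (- a - b).
Local Notation f := (- (2%:R *: d) - e).

Let Pa : P (lat a) := va.1.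
Let Pb : P (lat b) := vb.1.
Let Pc : P (lat c) := vc.1.
Let Pd : P (lat d) := vd.1.
Let Pe : P (lat e) := ve.1.
Let Pf : P (lat f) := vf.1.

Lemma Pmd : P (lat (- d)).
Proof.
have -> : (lat (- d) : 'cV[R]_3) = 2^-1 *: lat e + 2^-1 *: lat f.
  by rewrite latf latN; apply: cV3P; rewrite !mxE; field.
apply: (conv2 (P_convex hm) Pe Pf); rewrite ?invr_ge0 ?ler0n //; by field.
Qed.

Lemma ne_de (al be : int) :
  al *: d + be *: e = 0 -> (al != 0) || (be != 0) -> False.
Proof. by move=> h; have [-> ->] := indep_int hde h. Qed.

Lemma d_ne_e : d <> e.
Proof.
move=> h; have E : d - e = 0 by rewrite -h subrr.
by apply: (@ne_de 1 (-1)) => //; rewrite -E; ivec.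
Qed.
Lemma md_ne_e : - d <> e.
Proof.
move=> h; have E : - d - e = 0 by rewrite -h subrr.
by apply: (@ne_de (-1) (-1)) => //; rewrite -E; ivec.
Qed.
Lemma d_ne_f : d <> f.
Proof.
move=> h; have E : d - f = 0 by rewrite -h subrr.
by apply: (@ne_de 3 1) => //; rewrite -E; ivec.
Qed.
Lemma md_ne_f : - d <> f.
Proof.
move=> h; have E : - d - f = 0 by rewrite -h subrr.
by apply: (@ne_de 1 1) => //; rewrite -E; ivec.
Qed.
Lemma e_ne_f : e <> f.
Proof.
move=> h; have E : e - f = 0 by rewrite -h subrr.
by apply: (@ne_de 2 2) => //; rewrite -E; ivec.
Qed.

Lemma detf_ab : det3 a b f = - 2%:R * det3 a b d - det3 a b e.
Proof. rewrite /det3 !mxE; ring. Qed.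
Lemma detmd_ab : det3 a b (- d) = - det3 a b d.
Proof. rewrite /det3 !mxE; ring. Qed.
Lemma det_aba : det3 a b a = 0. Proof. rewrite /det3; ring. Qed.
Lemma det_abb : det3 a b b = 0. Proof. rewrite /det3; ring. Qed.
Lemma det_abc : det3 a b c = 0. Proof. rewrite /det3 !mxE; ring. Qed.

Lemma inT_det (v : 'cV[int]_3) : v = a \/ v = b \/ v = c -> det3 a b v = 0.
Proof. by case=> [->|[->|->]]; [exact: det_aba|exact: det_abb|exact: det_abc]. Qed.

Lemma D0_of (v : 'cV[int]_3) : is_vertex P (lat v) -> a <> v -> b <> v -> c <> v ->
  d <> v -> - d <> v -> det3 a b d = 0.
Proof.
move=> hv av bv cv dv mdv.
case: (ltrgt0P (det3 a b d)) => hD //; exfalso.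
- apply: (sign1 hm Pa Pb Pc hv av bv cv Pd Pmd dv mdv hD).
  by rewrite detmd_ab oppr_lt0.
- apply: (sign1 hm Pa Pb Pc hv av bv cv Pmd Pd mdv dv _ hD).
  by rewrite detmd_ab oppr_gt0.
Qed.

Lemma stepD : det3 a b d = 0.
Proof.
have [eT|eT] := boolP [|| e == a, e == b | e == c]; last first.
  apply: (D0_of ve); try (by move=> h; move: eT; rewrite h eqxx ?orbT).
  - exact: d_ne_e.
  - exact: md_ne_e.
have hE : det3 a b e = 0.
  by apply: inT_det; case/or3P: eT => /eqP ->; [left|right;left|right;right].
have [fT|fT] := boolP [|| f == a, f == b | f == c]; last first.
  apply: (D0_of vf); try (by move=> h; move: fT; rewrite h eqxx ?orbT).
  - exact: d_ne_f.
  - exact: md_ne_f.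
have hF : det3 a b f = 0.
  by apply: inT_det; case/or3P: fT => /eqP ->; [left|right;left|right;right].
move: hF; rewrite detf_ab hE; lia.
Qed.

Lemma stepE : det3 a b e != 0.
Proof. by apply/eqP => h; apply: H12; split=> //; exact: stepD. Qed.

Lemma detf_ab' : det3 a b f = - det3 a b e.
Proof. by rewrite detf_ab stepD mulr0 sub0r. Qed.

Lemma e_notT : ~ (e = a \/ e = b \/ e = c).
Proof. by move/inT_det => h; move: stepE; rewrite h eqxx. Qed.
Lemma f_notT : ~ (f = a \/ f = b \/ f = c).
Proof. by move/inT_det => h; move: stepE; rewrite -oppr_eq0 -detf_ab' h eqxx. Qed.

Lemma stepA : d = a \/ d = b \/ d = c.
Proof.
case: (ClassicalEpsilon.excluded_middle_informative (d = a \/ d = b \/ d = c)) => // hd; exfalso.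
have av : a <> d by move=> h; apply: hd; left.
have bv : b <> d by move=> h; apply: hd; right; left.
have cv : c <> d by move=> h; apply: hd; right; right.
have ed : e <> d by move=> h; apply: d_ne_e.
have fd : f <> d by move=> h; apply: d_ne_f.
case: (ltrgt0P (det3 a b e)) => hE.
- by apply: (sign1 hm Pa Pb Pc vd av bv cv Pe Pf ed fd hE); rewrite detf_ab' oppr_lt0.
- by apply: (sign1 hm Pa Pb Pc vd av bv cv Pf Pe fd ed _ hE); rewrite detf_ab' oppr_gt0.
- by move: stepE; rewrite hE eqxx.
Qed.

Lemma stepL1 (x : 'cV[int]_3) : P (lat x) -> x <> e -> x <> f -> det3 a b x = 0.
Proof.
move=> Px xe xf.
have ae : a <> e by move=> h; apply: e_notT; left.
have be : b <> e by move=> h; apply: e_notT; right; left.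
have ce : c <> e by move=> h; apply: e_notT; right; right.
have af : a <> f by move=> h; apply: f_notT; left.
have bf : b <> f by move=> h; apply: f_notT; right; left.
have cf : c <> f by move=> h; apply: f_notT; right; right.
have ef : e <> f := e_ne_f.
have fe : f <> e by move=> h; apply: ef.
have hF := detf_ab'.
case: (ltrgt0P (det3 a b x)) => hX //; exfalso;
 case: (ltrgt0P (det3 a b e)) => hE.
- by apply: (sign1 hm Pa Pb Pc ve ae be ce Px Pf xe fe hX); rewrite hF oppr_lt0.
- by apply: (sign1 hm Pa Pb Pc vf af bf cf Px Pe xf ef hX hE).
- by move: stepE; rewrite hE eqxx.
- by apply: (sign1 hm Pa Pb Pc vf af bf cf Pe Px ef xf hE hX).
- by apply: (sign1 hm Pa Pb Pc ve ae be ce Pf Px fe xe _ hX); rewrite hF oppr_gt0.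
- by move: stepE; rewrite hE eqxx.
Qed.

End Main.


Definition mat3 (x y z : 'cV[int]_3) : 'M[int]_3 :=
  \matrix_(i < 3, j < 3) nth 0 [:: nth 0 [:: x ord0 ord0; x i1 ord0; x i2 ord0] i;
                                   nth 0 [:: y ord0 ord0; y i1 ord0; y i2 ord0] i;
                                   nth 0 [:: z ord0 ord0; z i1 ord0; z i2 ord0] i] j.

Lemma det33 (T : comRingType) (G : nat -> nat -> T) : \det (\matrix_(i < 3, j < 3) G i j) =
  G 0 0 * (G 1 1 * G 2 2 - G 1 2 * G 2 1)
  - G 0 1 * (G 1 0 * G 2 2 - G 1 2 * G 2 0)
  + G 0 2 * (G 1 0 * G 2 1 - G 1 1 * G 2 0).
Proof.
rewrite (expand_det_row _ ord0) !big_ord_recr big_ord0 /= add0r.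
rewrite /cofactor !(expand_det_row _ ord0) !big_ord_recr !big_ord0 /= !add0r.
rewrite /cofactor !det_mx11 !mxE /=.
rewrite !expr0 ?expr1 /=. ring.
Qed.

Lemma det_mat3 (x y z : 'cV[int]_3) : \det (mat3 x y z) = det3 x y z.
Proof.
rewrite /mat3 (det33 (fun n m => nth 0 [:: nth 0 [:: x ord0 ord0; x i1 ord0; x i2 ord0] n;
                                   nth 0 [:: y ord0 ord0; y i1 ord0; y i2 ord0] n;
                                   nth 0 [:: z ord0 ord0; z i1 ord0; z i2 ord0] n] m)) /= /det3.
ring.
Qed.

Lemma mat3_mul (R : realType) (x y z : 'cV[int]_3) (al be ga : int) :
  map_mx (fun k : int => k%:~R) (mat3 x y z) *m (lat (vec3 al be ga) : 'cV[R]_3) =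
  lat (al *: x + be *: y + ga *: z).
Proof.
apply: cV3P; rewrite !mxE !big_ord_recr big_ord0 /= !mxE /=; ring.
Qed.

Section MainA.
Variable R : realType.
Variable P : 'cV[R]_3 -> Prop.
Hypothesis hm : minimal_fano P.
Variables d b e : 'cV[int]_3.
Hypothesis hdb : plane_lattice_basis R d b.
Hypothesis hde : plane_lattice_basis R d e.
Hypothesis vd : is_vertex P (lat d).
Hypothesis vb : is_vertex P (lat b).
Hypothesis vc : is_vertex P (lat (- d - b)).
Hypothesis ve : is_vertex P (lat e).
Hypothesis vf : is_vertex P (lat (- (2%:R *: d) - e)).
Hypothesis L1 : forall x, P (lat x) -> x <> e -> x <> - (2%:R *: d) - e -> det3 d b x = 0.
Hypothesis Eb : det3 d b e != 0.

Local Notation c := (- d - b).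
Local Notation f := (- (2%:R *: d) - e).

Let Pb : P (lat b) := vb.1.
Let Pc : P (lat c) := vc.1.
Let Pd : P (lat d) := vd.1.
Let Pe : P (lat e) := ve.1.
Let Pf : P (lat f) := vf.1.
Let Pcv : convex P := P_convex hm.

Lemma A_Pmd : P (lat (- d)).
Proof.
have -> : (lat (- d) : 'cV[R]_3) = 2^-1 *: lat e + 2^-1 *: lat f.
  by rewrite latf latN; apply: cV3P; rewrite !mxE; field.
apply: (conv2 Pcv Pe Pf); rewrite ?invr_ge0 ?ler0n //; by field.
Qed.

Lemma A_P0 : P 0.
Proof.
have -> : (0 : 'cV[R]_3) = 3^-1 *: lat d + 3^-1 *: lat b + 3^-1 *: lat c.
  by rewrite latB; apply: cV3P; rewrite !mxE; field.
apply: (conv3 Pcv Pd Pb Pc); rewrite ?invr_ge0 ?ler0n //; by field.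
Qed.

Lemma A_ne (x y : 'cV[int]_3) (al be : int) (u v : 'cV[int]_3) :
  plane_lattice_basis R u v -> x = y -> al *: u + be *: v = x - y ->
  (al != 0) || (be != 0) -> False.
Proof.
move=> huv h E; rewrite h subrr in E.
by have [-> ->] := indep_int huv E.
Qed.

Lemma detG : det3 d e b = - det3 d b e.
Proof. rewrite /det3; ring. Qed.
Lemma G_ne0 : det3 d e b != 0.
Proof. by rewrite detG oppr_eq0. Qed.
Lemma detc : det3 d e c = - det3 d e b.
Proof. rewrite /det3 !mxE; ring. Qed.

Lemma b_ne_d : b <> d. Proof. by move=> h; apply: (@A_ne b d (-1) 1 d b) => //; ivec. Qed.
Lemma b_ne_md : b <> - d. Proof. by move=> h; apply: (@A_ne b (- d) 1 1 d b) => //; ivec. Qed.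
Lemma c_ne_d : c <> d. Proof. by move=> h; apply: (@A_ne c d (-2) (-1) d b) => //; ivec. Qed.
Lemma c_ne_md : c <> - d. Proof. by move=> h; apply: (@A_ne c (- d) 0 (-1) d b) => //; ivec. Qed.
Lemma b_ne_c : b <> c. Proof. by move=> h; apply: (@A_ne b c 1 2 d b) => //; ivec. Qed.

Lemma detdb_f : det3 d b f = - det3 d b e. Proof. rewrite /det3 !mxE; ring. Qed.

Lemma b_ne_e : b <> e.
Proof. move=> h; move: Eb; rewrite -h /det3; apply/negP; rewrite negbK; apply/eqP; ring. Qed.
Lemma b_ne_f : b <> f.
Proof. move=> h; move: Eb; rewrite -oppr_eq0 -detdb_f -h /det3; apply/negP; rewrite negbK; apply/eqP; ring. Qed.
Lemma c_ne_e : c <> e.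
Proof. move=> h; move: Eb; rewrite -h /det3 !mxE; apply/negP; rewrite negbK; apply/eqP; ring. Qed.
Lemma c_ne_f : c <> f.
Proof. move=> h; move: Eb; rewrite -oppr_eq0 -detdb_f -h /det3 !mxE; apply/negP; rewrite negbK; apply/eqP; ring. Qed.

Lemma L2 (x : 'cV[int]_3) : P (lat x) -> x <> b -> x <> c -> det3 d e x = 0.
Proof.
move=> Px xb xc.
have dnb : d <> b by move=> h; apply: b_ne_d.
have mdnb : - d <> b by move=> h; apply: b_ne_md.
have enb : e <> b by move=> h; apply: b_ne_e.
have fnb : f <> b by move=> h; apply: b_ne_f.
have dnc : d <> c by move=> h; apply: c_ne_d.
have mdnc : - d <> c by move=> h; apply: c_ne_md.
have enc : e <> c by move=> h; apply: c_ne_e.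
have fnc : f <> c by move=> h; apply: c_ne_f.
have cnb : c <> b by move=> h; apply: b_ne_c.
have bnc : b <> c := b_ne_c.
have hC := detc.
have Pmd := A_Pmd.
case: (ltrgt0P (det3 d e x)) => hX //; exfalso;
 case: (ltrgt0P (det3 d e b)) => hG.
- by apply: (sign2 hm Pd Pmd Pe Pf vb dnb mdnb enb fnb Px Pc xb cnb hX); rewrite hC oppr_lt0.
- by apply: (sign2 hm Pd Pmd Pe Pf vc dnc mdnc enc fnc Px Pb xc bnc hX hG).
- by move: G_ne0; rewrite hG eqxx.
- by apply: (sign2 hm Pd Pmd Pe Pf vc dnc mdnc enc fnc Pb Px bnc xc hG hX).
- by apply: (sign2 hm Pd Pmd Pe Pf vb dnb mdnb enb fnb Pc Px cnb xb _ hX); rewrite hC oppr_gt0.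
- by move: G_ne0; rewrite hG eqxx.
Qed.

Lemma Pcong (x y : 'cV[R]_3) : P x -> x = y -> P y.
Proof. by move=> h <-. Qed.

Lemma d_ne0 : d <> 0.
Proof. by move=> h; apply: (@A_ne d 0 1 0 d e) => //; ivec. Qed.

Lemma lat_class (x : 'cV[int]_3) : P (lat x) ->
  x \in [:: d; e; f; b; c; - d; 0].
Proof.
move=> Px.
case: (eqVneq x e) => [->|xe]; first by rewrite !inE eqxx ?orbT.
case: (eqVneq x f) => [->|xf]; first by rewrite !inE eqxx ?orbT.
case: (eqVneq x b) => [->|xb]; first by rewrite !inE eqxx ?orbT.
case: (eqVneq x c) => [->|xc]; first by rewrite !inE eqxx ?orbT.
have h1 := L1 Px (elimN eqP xe) (elimN eqP xf).
have [m [n hx]] := lattice_plane hdb h1.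
have h2 := L2 Px (elimN eqP xb) (elimN eqP xc).
have n0 : n = 0.
  move: h2; rewrite hx.
  have -> : det3 d e (m *: d + n *: b) = n * det3 d e b by rewrite /det3 !mxE; ring.
  by move/eqP; rewrite mulf_eq0 (negbTE G_ne0) orbF => /eqP.
rewrite n0 scale0r addr0 in hx.
have [m2|[m2|m3]] : 2 <= m \/ m <= -2 \/ (m = -1 \/ m = 0 \/ m = 1) by lia.
- exfalso.
  have mR : (1 : R) < m%:~R.
    have : ((2:int)%:~R <= m%:~R :> R) by rewrite ler_int.
    lra.
  have m0 : (0 : R) < m%:~R by lra.
  have t0 : (0 : R) < m%:~R^-1 by rewrite invr_gt0.
  have t1 : (m%:~R : R)^-1 < 1 by rewrite invf_lt1.
  have hdx : (lat d : 'cV[R]_3) = m%:~R^-1 *: lat x + (1 - m%:~R^-1) *: (0 : 'cV[R]_3).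
    by rewrite hx latZ scaler0 addr0 scalerA mulVf ?gt_eqF // scale1r.
  have := vd.2 _ _ _ Px A_P0 t0 t1 hdx.
  rewrite hx latZ.
  move/eqP; rewrite scaler_eq0 (gt_eqF m0) /= => /eqP.
  by rewrite -(lat0 R) => /lat_inj; apply: d_ne0.
- exfalso.
  have mR : (m%:~R : R) <= -2.
    have : (m%:~R <= (-2 : int)%:~R :> R) by rewrite ler_int.
    lra.
  set D := (lat d : 'cV[R]_3).
  have Pm2 : P (- D - D).
    have -> : - D - D = (2 / (- m%:~R)) *: lat x + (1 - 2 / (- m%:~R)) *: (0 : 'cV[R]_3).
      by rewrite hx latZ scaler0 addr0 scalerA; apply: cV3P; rewrite !mxE; field; apply/eqP; lra.
    apply: (conv2 Pcv Px A_P0).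
    - by apply: divr_ge0; lra.
    - rewrite subr_ge0 ler_pdivrMr; lra.
    - by rewrite addrC subrK.
  have hmid : interior3 P (- D).
    have h1' : det3 (lat e + D) D (lat b + D) = - (det3 d e b)%:~R.
      by rewrite -det3_lat /det3 !mxE; ring.
    have h2' : det3 (lat e + D) D (lat c + D) = (det3 d e b)%:~R.
      by rewrite -det3_lat /det3 !mxE; ring.
    have E1 : P (- D + (lat e + D)) by rewrite addrC addrK; exact: Pe.
    have E2 : P (- D - (lat e + D)).
      have -> : - D - (lat e + D) = lat f by rewrite latf; apply: cV3P; rewrite !mxE; ring.
      exact: Pf.
    have E3 : P (- D + D) by rewrite addNr; exact: A_P0.
    have E4 : P (- D - D) := Pm2.
    have E5 : P (- D + (lat b + D)) by rewrite addrC addrK; exact: Pb.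
    have E6 : P (- D + (lat c + D)) by rewrite addrC addrK; exact: Pc.
    case: (ltrgt0P (det3 d e b)) => hG.
    - apply: (interior_frame Pcv E1 E2 E3 E4 E6 E5); rewrite ?h1' ?h2'.
      + by rewrite ltr0z.
      + by rewrite oppr_lt0 ltr0z.
    - apply: (interior_frame Pcv E1 E2 E3 E4 E5 E6); rewrite ?h1' ?h2'.
      + by rewrite oppr_gt0 ltrz0.
      + by rewrite ltrz0.
    - by move: G_ne0; rewrite hG eqxx.
  have : interior3 P (lat (- d)) by rewrite latN.
  move/((hm.1.2 (- d)).1)/eqP; rewrite oppr_eq0 => /eqP; exact: d_ne0.
- by rewrite hx; case: m3 => [->|[->|->]]; [rewrite scaleN1r|rewrite scale0r|rewrite scale1r]; rewrite !inE eqxx ?orbT.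
Qed.

Lemma cand_pt (z x : 'cV[int]_3) (u v K : int) : P (lat z) -> 1 <= K -> ineqZ u v K ->
  K *: x = u *: d + v *: e + z -> P (lat x).
Proof.
move=> Pz K1 [h1 h2 h3] hK.
have K1' : (1 : R) <= K%:~R.
  have : ((1:int)%:~R <= K%:~R :> R) by rewrite ler_int.
  lra.
have KR0 : (K%:~R : R) != 0 by apply/eqP; lra.
have -> : (lat x : 'cV[R]_3) = K%:~R^-1 *: (lat z + u%:~R *: lat d + v%:~R *: lat e).
  apply: (scalerI KR0); rewrite scalerA mulfV // scale1r -[K%:~R *: lat x]latZ hK.
  by rewrite !latD !latZ; apply: cV3P; rewrite !mxE; ring.
apply: cand => //.
- by rewrite -latf.
- have : ((u + v)%:~R <= (K - 1)%:~R :> R) by rewrite ler_int.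
  by rewrite intrD intrB.
- have : ((v - u)%:~R <= (K - 1)%:~R :> R) by rewrite ler_int.
  by rewrite intrB intrB.
- have : ((u - 3 * v)%:~R <= (K - 1)%:~R :> R) by rewrite ler_int.
  by rewrite intrB intrB intrM.
Qed.

Lemma bc_of (x : 'cV[int]_3) : P (lat x) -> det3 d e x != 0 -> x = b \/ x = c.
Proof.
move=> Px hx; case: (eqVneq x b) => [->|xb]; first by left.
case: (eqVneq x c) => [->|xc]; first by right.
by move: hx; rewrite (L2 Px (elimN eqP xb) (elimN eqP xc)) eqxx.
Qed.

Lemma detK : det3 d e b = 1 \/ det3 d e b = -1.
Proof.
have [g hg] := complete_basis hde.
set G := det3 d e b.
have hz : det3 d e (b - G *: g) = 0.
  have -> : det3 d e (b - G *: g) = det3 d e b - G * det3 d e g by rewrite /det3 !mxE; ring.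
  by rewrite hg mulr1 subrr.
have [p [q hb]] := lattice_plane hde hz.
have [s [g' [K [hs [hg' [hK [hbK hGK]]]]]]] : exists s g' (K : int),
    [/\ (s = 1 \/ s = -1), det3 d e g' = s, 1 <= K, b = p *: d + q *: e + K *: g' & G = s * K].
  case: (ltrgt0P G) => hG.
  - exists 1, g, G; split=> //; [by left|by rewrite -hb subrK|by rewrite mul1r].
  - exists (-1), (- g), (- G); split=> //; first by right.
    + by rewrite -hg /det3 !mxE; ring.
    + by lia.
    + by rewrite scaleNr scalerN opprK -hb subrK.
    + by rewrite mulN1r opprK.
  - by move: G_ne0; rewrite -/G hG eqxx.
have [K1|K2] : K = 1 \/ 2 <= K by lia.
  by rewrite hGK K1 mulr1; case: hs => ->; [left|right].
exfalso.
have sne : s != 0 by case: hs => ->.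
have K1 : 1 <= K by lia.
have hcb : det3 d e c = - G by exact: detc.
case: (num_main p q K2) => [[X [Y hXY]]|[X [Y hXY]]].
- set x := X *: d + Y *: e + g'.
  have Px : P (lat x).
    apply: (cand_pt Pb K1 hXY).
    by rewrite /x hbK; apply: cV3P; rewrite !mxE; ring.
  have hx : det3 d e x = s by rewrite -hg' /x /det3 !mxE; ring.
  case: (bc_of Px) => [|hxb|hxc]; first by rewrite hx.
  + move: hx; rewrite hxb -/G hGK; case: hs => ->; lia.
  + move: hx; rewrite hxc hcb hGK; case: hs => ->; lia.
- set x := X *: d + Y *: e - g'.
  have Px : P (lat x).
    apply: (cand_pt Pc K1 hXY).
    have -> : c = - d - (p *: d + q *: e + K *: g') by rewrite -hbK.
    by rewrite /x; apply: cV3P; rewrite !mxE; ring.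
  have hx : det3 d e x = - s by rewrite -hg' /x /det3 !mxE; ring.
  case: (bc_of Px) => [|hxb|hxc]; first by rewrite hx oppr_eq0.
  + move: hx; rewrite hxb -/G hGK; case: hs => ->; lia.
  + move: hx; rewrite hxc hcb hGK; case: hs => ->; lia.
Qed.

Definition S5 := [:: d; e; f; b; c].
Definition S5P (y : 'cV[R]_3) := exists2 v, v \in S5 & y = lat v.
Definition P0P (y : 'cV[R]_3) := exists2 v, v \in P0_cols & y = lat v.

Lemma P_eq (x : 'cV[R]_3) : P x <-> conv S5P x.
Proof.
split; last first.
  apply: (lp_conv (P_lp hm)) => y [v]; rewrite /S5 !inE.
  by move=> /predU1P [->|/predU1P [->|/predU1P [->|/predU1P [->|/eqP->]]]] ->.
have [s0 hs0] := P_lp hm.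
move/hs0; apply: conv_closed; first exact: conv_convex.
move=> y [v vs ->].
have Pv : P (lat v) by apply/hs0; apply: conv_in; exists v.
have S5d : S5P (lat d) by exists d; rewrite ?inE ?eqxx.
have S5e : S5P (lat e) by exists e; rewrite ?inE ?eqxx ?orbT.
have S5f : S5P (lat f) by exists f; rewrite ?inE ?eqxx ?orbT.
have S5b : S5P (lat b) by exists b; rewrite ?inE ?eqxx ?orbT.
have S5c : S5P (lat c) by exists c; rewrite ?inE ?eqxx ?orbT.
move: (lat_class Pv); rewrite !inE.
move=> /predU1P [->|/predU1P [->|/predU1P [->|/predU1P [->|/predU1P [->|/predU1P [->|/eqP->]]]]]];
  try exact: conv_in.
- have -> : (lat (- d) : 'cV[R]_3) = 2^-1 *: lat e + 2^-1 *: lat f.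
    by rewrite latf latN; apply: cV3P; rewrite !mxE; field.
  apply: (conv2 (@conv_convex R S5P)); try exact: conv_in; rewrite ?invr_ge0 ?ler0n //; by field.
- have -> : (lat 0 : 'cV[R]_3) = 3^-1 *: lat d + 3^-1 *: lat b + 3^-1 *: lat c.
    by rewrite lat0 latB; apply: cV3P; rewrite !mxE; field.
  apply: (conv3 (@conv_convex R S5P)); try exact: conv_in; rewrite ?invr_ge0 ?ler0n //; by field.
Qed.

Let AR := map_mx (fun k : int => k%:~R) (mat3 d e b) : 'M[R]_3.

Lemma fwd_pt (y : 'cV[R]_3) : S5P y -> exists y', P0P y' /\ y = AR *m y'.
Proof.
move=> [v]; rewrite /S5 !inE.
move=> /predU1P [->|/predU1P [->|/predU1P [->|/predU1P [->|/eqP->]]]] ->.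
- exists (lat (vec3 1 0 0)); split; first by exists (vec3 1 0 0); rewrite ?inE ?eqxx.
  by rewrite /AR mat3_mul; congr lat; ivec.
- exists (lat (vec3 0 1 0)); split; first by exists (vec3 0 1 0); rewrite ?inE ?eqxx ?orbT.
  by rewrite /AR mat3_mul; congr lat; ivec.
- exists (lat (vec3 (-2) (-1) 0)); split; first by exists (vec3 (-2) (-1) 0); rewrite ?inE ?eqxx ?orbT.
  by rewrite /AR mat3_mul; congr lat; ivec.
- exists (lat (vec3 0 0 1)); split; first by exists (vec3 0 0 1); rewrite ?inE ?eqxx ?orbT.
  by rewrite /AR mat3_mul; congr lat; ivec.
- exists (lat (vec3 (-1) 0 (-1))); split; first by exists (vec3 (-1) 0 (-1)); rewrite ?inE ?eqxx ?orbT.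
  by rewrite /AR mat3_mul; congr lat; ivec.
Qed.

Lemma bwd_pt (y : 'cV[R]_3) : P0P y -> S5P (AR *m y).
Proof.
move=> [v]; rewrite /P0_cols !inE.
move=> /predU1P [->|/predU1P [->|/predU1P [->|/predU1P [->|/eqP->]]]] ->; rewrite /AR mat3_mul.
- by exists d; rewrite ?inE ?eqxx //; congr lat; ivec.
- by exists e; rewrite ?inE ?eqxx ?orbT //; congr lat; ivec.
- by exists b; rewrite ?inE ?eqxx ?orbT //; congr lat; ivec.
- by exists f; rewrite ?inE ?eqxx ?orbT //; congr lat; ivec.
- by exists c; rewrite ?inE ?eqxx ?orbT //; congr lat; ivec.
Qed.

Lemma mainA : GL3Z_equiv P P0.
Proof.
exists (mat3 d e b); split.
  by rewrite unitmxE det_mat3; case: detK => ->; [exact: unitr1|exact: unitrN1].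
move=> x; rewrite P_eq; split.
  move=> [n [p [w [Sp [w0 [w1 ->]]]]]].
  have [Y hY] := fin_all_exists (fun i => fwd_pt (Sp i)).
  exists (\sum_(i < n) w i *: Y i); split.
    by exists n, Y, w; split=> //; move=> i; case: (hY i).
  rewrite mulmx_sumr; apply: eq_bigr => i _.
  by rewrite -scalemxAr; case: (hY i) => _ ->.
move=> [y [[n [p [w [Sp [w0 [w1 ->]]]]]] ->]].
exists n, (fun i => AR *m p i), w; split; first by move=> i; apply: bwd_pt.
split=> //; split=> //.
rewrite mulmx_sumr; apply: eq_bigr => i _; by rewrite -scalemxAr.
Qed.

End MainA.

Lemma det_rot (a b x : 'cV[int]_3) : det3 b (- a - b) x = det3 a b x.
Proof. rewrite /det3 !mxE; ring. Qed.
Lemma det_rot2 (a b x : 'cV[int]_3) : det3 (- a - b) a x = det3 a b x.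
Proof. rewrite /det3 !mxE; ring. Qed.
Lemma rotE (a b : 'cV[int]_3) : - b - (- a - b) = a.
Proof. ivec. Qed.
Lemma rotE2 (a b : 'cV[int]_3) : - (- a - b) - a = b.
Proof. ivec. Qed.

Theorem lemma4p12 (R : realType) (P : 'cV[R]_3 -> Prop)
    (u1 w1 u2 w2 : 'cV[int]_3) :
  minimal_fano P ->
  (* T1 = conv{u1, w1, -u1-w1}, image of conv{(1,0),(0,1),(-1,-1)} *)
  plane_lattice_basis R u1 w1 ->
  is_vertex P (lat u1) -> is_vertex P (lat w1) -> is_vertex P (lat (- u1 - w1)) ->
  (* T2 = conv{u2, w2, -2u2-w2}, image of conv{(1,0),(0,1),(-2,-1)} *)
  plane_lattice_basis R u2 w2 ->
  is_vertex P (lat u2) -> is_vertex P (lat w2) ->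
  is_vertex P (lat (- (2%:R *: u2) - w2)) ->
  (* L1 <> L2 *)
  ~ (forall x : 'cV[R]_3, span2 (lat u1) (lat w1) x <-> span2 (lat u2) (lat w2) x) ->
  GL3Z_equiv P P0.
Proof.
move=> hm hab va vb vc hde vd ve vf Hsp.
have H12 := H12_of hab hde Hsp.
have sA := stepA hm hde va vb vc vd ve vf H12.
have L1 := stepL1 hm hde va vb vc vd ve vf H12.
have E := stepE hm hde va vb vc vd ve vf H12.
case: sA => [hd|[hd|hd]]; subst u2.
- exact: (mainA hm hab hde vd vb vc ve vf L1 E).
- have hdb := pb_rot hab.
  have vc' : is_vertex P (lat (- w1 - (- u1 - w1))) by rewrite rotE.
  apply: (mainA hm hdb hde vd vc vc' ve vf _ _).
    by move=> x Px xe xf; rewrite det_rot; exact: L1.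
  by rewrite det_rot.
- have hdb := pb_rot (pb_rot hab); rewrite rotE in hdb.
  have vc' : is_vertex P (lat (- (- u1 - w1) - u1)) by rewrite rotE2.
  apply: (mainA hm hdb hde vd va vc' ve vf _ _).
    by move=> x Px xe xf; rewrite det_rot2; exact: L1.
  by rewrite det_rot2.
Qed.
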